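(* For $s,s'\in\mathscr S_+$: (1) $\lfloor s\rfloor\preceq s\preceq\lceil s\rceil$; (2) if $s\preceq s'$, then $\lfloor s\rfloor\preceq\lfloor s'\rfloor$, $\lceil s\rceil\preceq\lceil s'\rceil$, and $\mathfrak d(s)\le\mathfrak d(s')$.
   Context: $\omega=\{0,1,\dots\}$, $[m]=\{1,\dots,m\}$. A finite sign sequence is $s\in\{-,0,+\}^\omega$ with finitely many nonzero entries; $\mathscr S$ their set; $\operatorname{supp}(s)=\{i:s_i\ne0\}$; $\mathscr S_+=\mathscr S\cap\{0,+\}^\omega$. $\mathrm{SC}(t)$ = number of pairs $i<j$ with $\{t_i,t_j\}=\{-,+\}$ and $t_k=0$ for $i<k<j$. $\mathfrak d(s)=\max\{\mathrm{SC}(t):t\in\mathscr S,\ t_i\in\{-,0,s_i\}\ \forall i\}$ for $s\in\mathscr S_+$. $\mathscr S_+^\circ=\{s\in\mathscr S_+:\mathfrak d(s)=\#\operatorname{supp}(s)\}$. Interval decomposition of $s\in\mathscr S_+$: $\operatorname{supp}(s)=X_0\amalg\cdots\amalg X_k$ into intervals with $0\in X_0$ if $0\in\operatorname{supp}(s)$ else $X_0=\emptyset$, $X_i\neq\emptyset$ for $i\in[k]$, $\min X_i-\max X_{i-1}\ge2$ ($\max\emptyset=-\infty$). $\lfloor X_i\rfloor=\{\min X_i-1\}\amalg X_i$ if $\#X_i$ odd, else $X_i$; $\lceil X_i\rceil=X_i\amalg\{\max X_i+1\}$ if $\#X_i$ odd, else $X_i$; $\operatorname{supp}(\lfloor s\rfloor)=X_0\amalg\lfloor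 X_1\rfloor\amalg\cdots\amalg\lfloor X_k\rfloor$, $\operatorname{supp}(\lceil s\rceil)=X_0\amalg\lceil X_1\rceil\amalg\cdots\amalg\lceil X_k\rceil$. On $\mathscr S_+^\circ$: with $\operatorname{supp}(s)=\{d_1>\cdots>d_m\}$, $\operatorname{supp}(s')=\{d'_1>\cdots>d'_{m'}\}$, $s\preceq_0 s'$ iff $m\le m'$ and $d_i\le d'_i$ for $i\in[m]$. On $\mathscr S_+$: $s\preceq s'$ iff $s=s'$, or $s\ne s'$ and $\lceil s\rceil\preceq_0\lfloor s'\rfloor$ (a partial order); $s\prec s'$ means $s\preceq s'$ and $s\ne s'$. *)

(* Defs.v *)
From Stdlib Require Import ClassicalEpsilon.
From HB Require Import structures.
From mathcomp Require Import all_boot.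
Set Implicit Arguments. Unset Strict Implicit. Unset Printing Implicit Defensive.

Inductive sign := Sm | Sz | Sp.

Definition sign_eqb (x y : sign) : bool :=
  match x, y with Sm, Sm | Sz, Sz | Sp, Sp => true | _, _ => false end.
Lemma sign_eqP : Equality.axiom sign_eqb.
Proof. by case; case; constructor. Qed.
HB.instance Definition _ := hasDecEq.Build sign sign_eqP.

(* A finite sign sequence is represented by a finite list; entry i is
   [sgn_at s i] (= 0 beyond the end of the list).  Every finitely supported
   element of {-,0,+}^omega is represented (non-uniquely, up to trailing 0s). *)
Definition sseq := seq sign.
Definition sgn_at (s : sseq) (i : nat) : sign := nth Sz s i.

Definition eqS (s s' : sseq) : Prop := forall i, sgn_at s i = sgn_at s' i.

Definition Splus (s : sseq) : bool := all (fun x => x != Sm) s.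

Definition insupp (s : sseq) (i : nat) : bool := sgn_at s i != Sz.

Definition suppl (s : sseq) : seq nat := [seq i <- iota 0 (size s) | insupp s i].

Definition opposite (x y : sign) : bool :=
  ((x == Sm) && (y == Sp)) || ((x == Sp) && (y == Sm)).
Definition SC (t : sseq) : nat :=
  \sum_(j < size t) \sum_(i < j)
     [&& opposite (sgn_at t i) (sgn_at t j)
       & all (fun k => sgn_at t k == Sz) (iota i.+1 (j - i.+1))].

Definition admissible (s t : sseq) : Prop :=
  forall i, sgn_at t i \in [:: Sm; Sz; sgn_at s i].

Definition dd (s : sseq) : nat :=
  epsilon (inhabits 0%N)
    (fun n => (exists t, admissible s t /\ SC t = n) /\
              (forall t, admissible s t -> SC t <= n)).

(* [a, b] is one of the intervals of the interval decomposition of supp(s),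
   i.e. a maximal interval of consecutive elements of supp(s). *)
Definition isblock (s : sseq) (a b : nat) : bool :=
  [&& a <= b, all (insupp s) (iota a (b - a).+1),
      (a == 0) || ~~ insupp s a.-1 & ~~ insupp s b.+1].

(* supp(floor s): add min X_i - 1 for every X_i (i >= 1, i.e. min X_i >= 1)
   of odd cardinality. *)
Definition in_floor (s : sseq) (i : nat) : bool :=
  insupp s i || has (fun b => isblock s i.+1 b && odd (b - i)) (iota 0 (size s)).

(* supp(ceil s): add max X_i + 1 for every X_i (i >= 1, i.e. min X_i >= 1)
   of odd cardinality. *)
Definition in_ceil (s : sseq) (i : nat) : bool :=
  insupp s i ||
  (0 < i) && has (fun a => [&& isblock s a i.-1, 0 < a & odd (i - a)])
                 (iota 0 (size s)).

Definition sfloor (s : sseq) : sseq :=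
  [seq (if in_floor s i then Sp else Sz) | i <- iota 0 (size s).+1].
Definition sceil (s : sseq) : sseq :=
  [seq (if in_ceil s i then Sp else Sz) | i <- iota 0 (size s).+1].

Definition le0 (s s' : sseq) : Prop :=
  let ds := rev (suppl s) in
  let ds' := rev (suppl s') in
  size ds <= size ds' /\ forall i, i < size ds -> nth 0 ds i <= nth 0 ds' i.

Definition preceq (s s' : sseq) : Prop :=
  eqS s s' \/ (~ eqS s s' /\ le0 (sceil s) (sfloor s')).

(* Main.v *)
Require Import Defs.
From mathcomp Require Import all_boot zify.
From Stdlib Require Import ClassicalEpsilon Classical.
Set Implicit Arguments. Unset Strict Implicit.

Fixpoint Lp (s : sseq) (j : nat) : nat :=
  match j with 0 => 0 | j'.+1 => if insupp s j' then (Lp s j').+1 else 0 end.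

Lemma Lp_le s j : Lp s j <= j.
Proof. elim: j => //= j IH; case: ifP => //. Qed.

Lemma Lp_run s j i : j - Lp s j <= i < j -> insupp s i.
Proof.
elim: j i => [|j IH] i /=; first by lia.
case: ifP => Hp; last by lia.
move=> Hi; case: (ltnP i j) => Hij; first by apply: IH; rewrite subSS in Hi; lia.
by have -> : i = j by lia.
Qed.

Lemma Lp_stop s j : Lp s j < j -> ~~ insupp s (j - Lp s j).-1.
Proof.
elim: j => [|j IH] //=; case: ifP => Hp.
  by rewrite subSS; move=> H; apply: IH; lia.
by rewrite subn0 /= Hp.
Qed.

Lemma Lp_inv s c j : c < j -> ~~ insupp s c ->
  (forall i, c < i < j -> insupp s i) -> Lp s j = j - c.+1.
Proof.
elim: j => [|j IH] // Hcj Hc Hr /=.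
case: (ltnP c j) => H.
  have Hj : insupp s j by apply: Hr; lia.
  rewrite Hj IH //; first by lia.
  by move=> i Hi; apply: Hr; lia.
have E : c = j by lia.
by subst c; rewrite (negbTE Hc) subnn.
Qed.

Lemma Lp_full s j : (forall i, i < j -> insupp s i) -> Lp s j = j.
Proof.
elim: j => [|j IH] //= Hr; rewrite Hr // IH // => i Hi; apply: Hr; lia.
Qed.

Lemma insupp_size s i : insupp s i -> i < size s.
Proof. by rewrite /insupp /sgn_at; case: ltnP => // H; rewrite nth_default. Qed.

Lemma all_iotaP (P : pred nat) a n : reflect (forall i, a <= i < a + n -> P i) (all P (iota a n)).
Proof.
apply: (iffP allP) => H i; first by move=> Hi; apply: H; rewrite mem_iota.
by rewrite mem_iota => Hi; apply: H.
Qed.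

Lemma in_ceil_nS s j : ~~ insupp s j -> in_ceil s j = odd (Lp s j) && (Lp s j < j).
Proof.
move=> Hj; rewrite /in_ceil (negbTE Hj) /=.
apply/idP/idP.
  case/andP=> Hj0 /hasP [a _ /and3P [Hb Ha0 Hodd]].
  move: Hb; rewrite /isblock => /and4P [Hab /all_iotaP Hall H0 _].
  have Hna : ~~ insupp s a.-1 by move: H0; case: (a) Ha0.
  have E : Lp s j = j - a.
    have Hi : forall i, a.-1 < i < j -> insupp s i by move=> i Hi; apply: Hall; lia.
    have Hc : a.-1 < j by lia.
    rewrite (Lp_inv Hc Hna Hi); lia.
  rewrite E Hodd; lia.
case/andP=> Hodd Hlt.
have Hl0 : 0 < Lp s j by case: (Lp s j) Hodd.
apply/andP; split; first by lia.
apply/hasP; exists (j - Lp s j).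
  rewrite mem_iota /= add0n; apply: insupp_size; apply: (@Lp_run s j); lia.
apply/and3P; split; last first.
  - by have -> : j - (j - Lp s j) = Lp s j by have := Lp_le s j; lia.
  - lia.
rewrite /isblock; apply/and4P; split.
- lia.
- apply/all_iotaP => i Hi; apply: (@Lp_run s j); lia.
- have := Lp_stop Hlt; rewrite orbC => ->; done.
- by have -> : j.-1.+1 = j by lia.
Qed.

Lemma in_floor_prev s j : ~~ insupp s j -> Lp s j < j ->
  in_floor s (j - (Lp s j).+1) = odd (Lp s j).
Proof.
move=> Hj Hlt; set c := j - (Lp s j).+1.
have Hc : ~~ insupp s c by have := Lp_stop Hlt; have -> : (j - Lp s j).-1 = c by rewrite /c; lia.
rewrite /in_floor (negbTE Hc) /=.
apply/idP/idP.
  case/hasP=> b _ /andP [Hb Hodd].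
  move: Hb; rewrite /isblock => /and4P [Hab /all_iotaP Hall _ Hb1].
  have E : b = j.-1.
    case: (ltnP b j.-1) => H1.
      have : insupp s b.+1 by apply: (@Lp_run s j); rewrite /c in Hab; lia.
      by rewrite (negbTE Hb1).
    case: (ltnP j.-1 b) => H2; last by lia.
    have : insupp s j by apply: Hall; rewrite /c in Hab *; lia.
    by rewrite (negbTE Hj).
  move: Hodd; rewrite E /c; have := Lp_le s j.
  have Hl : 0 < j by lia.
  by have -> : j.-1 - (j - (Lp s j).+1) = Lp s j by lia.
move=> Hodd.
have Hl0 : 0 < Lp s j by case: (Lp s j) Hodd.
apply/hasP; exists j.-1.
  rewrite mem_iota /= add0n; apply: insupp_size; apply: (@Lp_run s j); lia.
apply/andP; split.
  rewrite /isblock; apply/and4P; split.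
  - rewrite /c; lia.
  - apply/all_iotaP => i Hi; apply: (@Lp_run s j); rewrite /c in Hi; lia.
  - have -> : c.+1.-1 = c by []. by rewrite Hc orbT.
  - by have -> : j.-1.+1 = j by lia.
by have -> : j.-1 - c = Lp s j by rewrite /c; have := Lp_le s j; lia.
Qed.

Lemma in_floor_bound s i : in_floor s i -> i <= size s.
Proof.
rewrite /in_floor => /orP [/insupp_size|/hasP [b Hb /andP [Hbl _]]]; first lia.
move: Hb; rewrite mem_iota add0n /=; move: Hbl; rewrite /isblock => /and4P [H1 _ _ _]; lia.
Qed.

Lemma in_ceil_bound s i : in_ceil s i -> i <= size s.
Proof.
rewrite /in_ceil => /orP [/insupp_size|/andP [H0 /hasP [a Ha /and3P [Hbl _ _]]]]; first lia.
move: Hbl; rewrite /isblock => /and4P [H1 /all_iotaP Hall _ _].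
have : insupp s i.-1 by apply: Hall; lia.
move/insupp_size; lia.
Qed.

Lemma insupp_floor s i : insupp s i -> in_floor s i.
Proof. by rewrite /in_floor => ->. Qed.
Lemma insupp_ceil s i : insupp s i -> in_ceil s i.
Proof. by rewrite /in_ceil => ->. Qed.

Lemma insupp_map (f : nat -> bool) n i :
  (forall i, f i -> i < n) ->
  insupp [seq (if f i then Sp else Sz) | i <- iota 0 n] i = f i.
Proof.
move=> Hb; rewrite /insupp /sgn_at.
case: (ltnP i n) => H.
  by rewrite (nth_map 0) ?size_iota // nth_iota // add0n; case: (f i).
rewrite nth_default ?size_map ?size_iota //.
by case E: (f i) => //; have := Hb _ E; lia.
Qed.

Lemma insupp_sfloor s i : insupp (sfloor s) i = in_floor s i.
Proof. by rewrite insupp_map // => k /in_floor_bound; lia. Qed.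
Lemma insupp_sceil s i : insupp (sceil s) i = in_ceil s i.
Proof. by rewrite insupp_map // => k /in_ceil_bound; lia. Qed.

Definition PC (f : nat -> bool) n := count f (iota 0 n).

Lemma PC_run (f : nat -> bool) c l : (forall i, c < i < c.+1 + l -> f i) ->
  PC f (c.+1 + l) = PC f c + f c + l.
Proof.
move=> H; rewrite /PC iotaD count_cat add0n -[c.+1]addn1 iotaD count_cat /= add0n addn0.
have -> : count f (iota (c + 1) l) = l; last by [].
have {2}-> : l = size (iota (c+1) l) by rewrite size_iota.
apply/eqP; rewrite -all_count; apply/all_iotaP => i Hi; apply: H; lia.
Qed.

Lemma PC_full (f : nat -> bool) j : (forall i, i < j -> f i) -> PC f j = j.
Proof.
move=> H; rewrite /PC; have {2}-> : j = size (iota 0 j) by rewrite size_iota.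
apply/eqP; rewrite -all_count; apply/all_iotaP => i Hi; apply: H; lia.
Qed.

Lemma step_data s j : ~~ insupp s j -> Lp s j < j ->
  let c := j - (Lp s j).+1 in
  [/\ j = c.+1 + Lp s j, ~~ insupp s c & forall i, c < i < c.+1 + Lp s j -> insupp s i].
Proof.
move=> Hj Hlt c; have Hle := Lp_le s j; split.
- rewrite /c; lia.
- by have := Lp_stop Hlt; have -> : (j - Lp s j).-1 = c by rewrite /c; lia.
- move=> i Hi; apply: (@Lp_run s j); rewrite /c in Hi; lia.
Qed.

Lemma coreA s j : ~~ insupp s j -> PC (in_floor s) j = PC (in_ceil s) j + in_ceil s j.
Proof.
elim/ltn_ind: j => j IH Hj.
have Hle := Lp_le s j.
case: (ltnP (Lp s j) j) => Hlt; last first.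
  have E : Lp s j = j by lia.
  have Hall : forall i, i < j -> insupp s i by move=> i Hi; apply: (@Lp_run s j); lia.
  rewrite in_ceil_nS // E ltnn andbF addn0 !PC_full //.
    by move=> i /Hall /insupp_ceil.
  by move=> i /Hall /insupp_floor.
have [Ej Hc Hr] := step_data Hj Hlt.
set c := j - (Lp s j).+1 in Ej Hc Hr.
have Hcj : c < j by lia.
have HrC : forall i, c < i < c.+1 + Lp s j -> in_ceil s i by move=> i /Hr /insupp_ceil.
have HrF : forall i, c < i < c.+1 + Lp s j -> in_floor s i by move=> i /Hr /insupp_floor.
rewrite Ej (PC_run HrC) (PC_run HrF) -Ej (IH c Hcj Hc).
have HF := in_floor_prev Hj Hlt; rewrite -/c in HF.
rewrite HF (in_ceil_nS Hj) Hlt andbT; lia.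
Qed.

Lemma coreB s j : ~~ insupp s j -> forall j', j' <= j -> ~~ insupp s j' ->
  odd (PC (in_floor s) j) = odd (PC (in_floor s) j').
Proof.
elim/ltn_ind: j => j IH Hj j' Hj'j Hj'.
have Hle := Lp_le s j.
case: (ltnP (Lp s j) j) => Hlt; last first.
  have Hall : forall i, i < j -> insupp s i by move=> i Hi; apply: (@Lp_run s j); lia.
  case: (ltnP j' j) => H; first by rewrite Hall in Hj'.
  by have -> : j' = j by lia.
have [Ej Hc Hr] := step_data Hj Hlt.
set c := j - (Lp s j).+1 in Ej Hc Hr.
case: (ltnP j' j) => H; last by have -> : j' = j by lia.
have Hj'c : j' <= c.
  case: (ltnP c j') => // H2; have : insupp s j' by apply: Hr; lia.
  by rewrite (negbTE Hj').
have HrF : forall i, c < i < c.+1 + Lp s j -> in_floor s i by move=> i /Hr /insupp_floor.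
have HF := in_floor_prev Hj Hlt; rewrite -/c in HF.
rewrite Ej (PC_run HrF) HF -(IH c _ Hc j' Hj'c Hj'); last by lia.
rewrite -addnA oddD.
have -> : odd (odd (Lp s j) + Lp s j) = false by rewrite oddD; case: (odd (Lp s j)).
by rewrite addbF.
Qed.

Lemma PFgeC s x : PC (in_ceil s) x <= PC (in_floor s) x.
Proof.
case Hx: (insupp s x); last by rewrite coreA ?Hx //; lia.
have Hle := Lp_le s x.
case: (ltnP (Lp s x) x) => Hlt; last first.
  have Hall : forall i, i < x -> insupp s i by move=> i Hi; apply: (@Lp_run s x); lia.
  rewrite !PC_full //; [by move=> i /Hall /insupp_floor|by move=> i /Hall /insupp_ceil].
set c := x - (Lp s x).+1.
have Ex : x = c.+1 + Lp s x by rewrite /c; lia.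
have Hc : ~~ insupp s c by have := Lp_stop Hlt; have -> : (x - Lp s x).-1 = c by rewrite /c; lia.
have Hr : forall i, c < i < c.+1 + Lp s x -> insupp s i.
  by move=> i Hi; apply: (@Lp_run s x); rewrite /c in Hi; lia.
have HrC : forall i, c < i < c.+1 + Lp s x -> in_ceil s i by move=> i /Hr /insupp_ceil.
have HrF : forall i, c < i < c.+1 + Lp s x -> in_floor s i by move=> i /Hr /insupp_floor.
rewrite Ex (PC_run HrC) (PC_run HrF) (coreA Hc); lia.
Qed.

Lemma ceil_floor_sub s i : in_ceil (sfloor s) i -> in_floor s i.
Proof.
case HF: (in_floor s i) => //.
have Hn : ~~ insupp (sfloor s) i by rewrite insupp_sfloor HF.
rewrite in_ceil_nS // => /andP [Hodd Hlt].
have [Ei Hc Hr] := step_data Hn Hlt.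
set c := i - (Lp (sfloor s) i).+1 in Ei Hc Hr.
rewrite insupp_sfloor in Hc.
have HrF : forall k, c < k < c.+1 + Lp (sfloor s) i -> in_floor s k.
  by move=> k /Hr; rewrite insupp_sfloor.
have Hpi : ~~ insupp s i by apply/negP => /insupp_floor; rewrite HF.
have Hpc : ~~ insupp s c by apply/negP => /insupp_floor; rewrite (negbTE Hc).
have Hci : c <= i by lia.
have := coreB Hpi Hci Hpc.
rewrite Ei (PC_run HrF) (negbTE Hc) addn0 oddD Hodd.
by case: (odd _).
Qed.

Lemma ceil_ceil_sub s i : in_ceil (sceil s) i -> in_ceil s i.
Proof.
case HC: (in_ceil s i) => //.
have Hn : ~~ insupp (sceil s) i by rewrite insupp_sceil HC.
rewrite in_ceil_nS // => /andP [Hodd Hlt].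
have [Ei Hc Hr] := step_data Hn Hlt.
set c := i - (Lp (sceil s) i).+1 in Ei Hc Hr.
rewrite insupp_sceil in Hc.
have HrC : forall k, c < k < c.+1 + Lp (sceil s) i -> in_ceil s k.
  by move=> k /Hr; rewrite insupp_sceil.
have Hpi : ~~ insupp s i by apply/negP => /insupp_ceil; rewrite HC.
have Hpc : ~~ insupp s c by apply/negP => /insupp_ceil; rewrite (negbTE Hc).
have Hci : c <= i by lia.
have := coreB Hpi Hci Hpc.
rewrite (coreA Hpi) (coreA Hpc) HC (negbTE Hc) !addn0.
rewrite Ei (PC_run HrC) (negbTE Hc) addn0 oddD Hodd.
by case: (odd _).
Qed.

Definition geqr : rel nat := fun a b => b <= a.

Lemma geqr_trans : transitive geqr.
Proof. by move=> a b c; rewrite /geqr => H1 H2; lia. Qed.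

Lemma sorted_nth_count (D : seq nat) : sorted geqr D ->
  forall i x, i < size D -> (x <= nth 0 D i) = (i < count (leq x) D).
Proof.
elim: D => [|d D IH] //= Hs i x Hi.
have HsD : sorted geqr D by move: Hs; case: (D) => //= a l /andP [].
have Hmin : all (geqr d) D by apply: order_path_min Hs; exact: geqr_trans.
have Hle : forall k, k < size D -> nth 0 D k <= d.
  by move=> k Hk; move/allP: Hmin; apply; rewrite mem_nth.
case Hxd: (x <= d).
  case: i Hi => [|i] Hi //=; rewrite add1n ltnS IH //.
have Hc0 : count (leq x) D = 0.
  apply/eqP; rewrite -leqn0 leqNgt -has_count; apply/hasP => -[y Hy Hxy].
  by move/allP: Hmin => /(_ y Hy); rewrite /geqr => H; move: Hxd; rewrite (leq_trans Hxy H).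
rewrite Hc0 add0n ltn0.
case: i Hi => [|i] Hi //=; apply/negbTE; rewrite -ltnNge.
by apply: (leq_ltn_trans (Hle i _)); lia.
Qed.

Definition cntge (u : sseq) x := count (leq x) (suppl u).

Lemma suppl_sorted u : sorted geqr (rev (suppl u)).
Proof.
rewrite rev_sorted; apply: (sub_sorted (e := ltn)); first by move=> a b /ltnW.
apply: sorted_filter; [exact: ltn_trans | exact: iota_ltn_sorted].
Qed.

Lemma le0_of u v : (forall x, cntge u x <= cntge v x) -> le0 u v.
Proof.
move=> H; rewrite /le0 !size_rev; split.
  by have := H 0; rewrite /cntge !(eq_count (a2 := predT)) // !count_predT.
move=> i Hi.
set x := nth 0 (rev (suppl u)) i.
have Hu := sorted_nth_count (suppl_sorted u).
have Hv := sorted_nth_count (suppl_sorted v).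
have Hi' : i < size (rev (suppl u)) by rewrite size_rev.
have := Hu i x Hi'; rewrite leqnn count_rev => /esym Hc.
have Hcv : i < count (leq x) (suppl v) by apply: leq_trans Hc (H x).
have Hiv : i < size (rev (suppl v)).
  by rewrite size_rev; apply: leq_trans Hcv (count_size _ _).
by rewrite Hv // count_rev.
Qed.

Lemma le0_to u v : le0 u v -> forall x, cntge u x <= cntge v x.
Proof.
rewrite /le0 !size_rev => -[Hs Hn] x.
rewrite /cntge -(count_rev _ (suppl u)) -(count_rev _ (suppl v)).
set k := count (leq x) (rev (suppl u)).
case Ek: k => [|k'] //.
have Hk : k' < size (rev (suppl u)).
  by rewrite -ltnS -Ek; apply: count_size.
have Hu := sorted_nth_count (suppl_sorted u).
have Hv := sorted_nth_count (suppl_sorted v).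
have H1 : x <= nth 0 (rev (suppl u)) k' by rewrite Hu // -/k Ek.
have H2 : x <= nth 0 (rev (suppl v)) k'.
  by apply: leq_trans H1 _; apply: Hn; rewrite size_rev in Hk.
have Hk' : k' < size (rev (suppl v)) by rewrite !size_rev in Hk *; lia.
by rewrite Hv // in H2.
Qed.

Lemma cntge_N u x N : size u <= N ->
  cntge u x = count (fun i => insupp u i && (x <= i)) (iota 0 N).
Proof.
move=> HN; rewrite /cntge /suppl count_filter -(subnKC HN) iotaD count_cat.
rewrite (@eq_in_count _ _ pred0 (iota (0 + size u) _)); last first.
  move=> i; rewrite mem_iota add0n => /andP [H1 _] /=.
  by rewrite /insupp /sgn_at nth_default.
rewrite count_pred0 addn0; apply: eq_count => i /=; by rewrite andbC.
Qed.

Lemma cntge_sub u v : (forall i, insupp u i -> insupp v i) ->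
  forall x, cntge u x <= cntge v x.
Proof.
move=> H x; rewrite (@cntge_N u x (size u + size v)) ?leq_addr //.
rewrite (@cntge_N v x (size u + size v)) ?leq_addl //.
apply: sub_count => i /andP [H1 H2]; by rewrite H // H2.
Qed.

Lemma count_tail (f : nat -> bool) x N :
  count (fun i => f i && (x <= i)) (iota 0 N) = PC f N - PC f x.
Proof.
rewrite /PC; case: (leqP x N) => HxN.
  rewrite -(subnKC HxN) iotaD !count_cat add0n.
  rewrite (@eq_in_count _ _ pred0 (iota 0 x)); last first.
    by move=> i; rewrite mem_iota add0n => /andP [_ H] /=; rewrite leqNgt H andbF.
  rewrite (@eq_in_count _ _ f (iota x _)); last first.
    by move=> i; rewrite mem_iota => /andP [H _] /=; rewrite H andbT.
  by rewrite count_pred0 add0n addKn.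
rewrite (@eq_in_count _ _ pred0 (iota 0 N)); last first.
  by move=> i; rewrite mem_iota add0n => /andP [_ H] /=; rewrite leqNgt (ltn_trans H HxN) andbF.
rewrite count_pred0; apply/esym/eqP; rewrite subn_eq0.
rewrite -(subnKC (ltnW HxN)) iotaD count_cat; exact: leq_addr.
Qed.

Lemma floor_le_ceil s x : cntge (sfloor s) x <= cntge (sceil s) x.
Proof.
have HN1 : size (sfloor s) <= (size s).+1 by rewrite size_map size_iota.
have HN2 : size (sceil s) <= (size s).+1 by rewrite size_map size_iota.
rewrite (cntge_N x HN1) (cntge_N x HN2).
have E1 : count (fun i => insupp (sfloor s) i && (x <= i)) (iota 0 (size s).+1)
  = count (fun i => in_floor s i && (x <= i)) (iota 0 (size s).+1).
  by apply: eq_count => i; rewrite insupp_sfloor.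
have E2 : count (fun i => insupp (sceil s) i && (x <= i)) (iota 0 (size s).+1)
  = count (fun i => in_ceil s i && (x <= i)) (iota 0 (size s).+1).
  by apply: eq_count => i; rewrite insupp_sceil.
rewrite E1 E2 !count_tail.
have HpN : ~~ insupp s (size s).+1 by apply/negP => /insupp_size; lia.
have HcN : in_ceil s (size s).+1 = false by apply/negP => /in_ceil_bound; lia.
rewrite (coreA HpN) HcN addn0.
have := PFgeC s x; lia.
Qed.

Fixpoint lastnz (t : sseq) (j : nat) : sign :=
  match j with 0 => Sz | j'.+1 => if sgn_at t j' != Sz then sgn_at t j' else lastnz t j' end.

Lemma inner t x j :
  \sum_(i < j) [&& opposite (sgn_at t i) x & all (fun k => sgn_at t k == Sz) (iota i.+1 (j - i.+1))]
  = opposite (lastnz t j) x.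
Proof.
elim: j => [|j IH]; first by rewrite big_ord0.
rewrite big_ord_recr /= subnn /= andbT.
have E : forall i : 'I_j,
  [&& opposite (sgn_at t i) x
    & all (fun k => sgn_at t k == Sz) (iota i.+1 (j.+1 - i.+1))]
  = [&& opposite (sgn_at t i) x
    & all (fun k => sgn_at t k == Sz) (iota i.+1 (j - i.+1))] && (sgn_at t j == Sz).
  move=> i /=; have Hi := ltn_ord i.
  have -> : j.+1 - i.+1 = (j - i.+1) + 1 by lia.
  rewrite iotaD.
  have -> : i.+1 + (j - i.+1) = j by lia.
  by rewrite all_cat /= andbT andbA.
under eq_bigr => i _ do rewrite E.
case: eqP => Hz.
  under eq_bigr => i _ do rewrite andbT. rewrite IH Hz.
  by rewrite /= addn0.
rewrite big1 ?add0n //; by move=> i _; rewrite andbF.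
Qed.

Definition V t n := \sum_(j < n) opposite (lastnz t j) (sgn_at t j).

Lemma SC_V t : SC t = V t (size t).
Proof. by rewrite /SC /V; apply: eq_bigr => j _; rewrite inner. Qed.

Lemma V_S t n : V t n.+1 = V t n + opposite (lastnz t n) (sgn_at t n).
Proof. by rewrite /V big_ord_recr. Qed.

Lemma V_mono t m n : m <= n -> V t m <= V t n.
Proof.
move=> H; rewrite -(subnKC H); elim: (n - m) => [|k IH]; first by rewrite addn0.
by rewrite addnS V_S; apply: leq_trans IH (leq_addr _ _).
Qed.

Definition Inv s t j : Prop :=
 if (0 < j) && (sgn_at t j.-1 == Sp) then
   V t j + (lastnz t j == Sp) <= PC (in_ceil s) j + (odd (Lp s j) && (Lp s j < j))
 else V t j + (lastnz t j == Sp) + ((0 < Lp s j) && (odd (Lp s j) || (Lp s j == j)))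
        <= PC (in_ceil s) j.

Lemma lastnz_Sz t j : lastnz t j = Sz -> V t j = 0.
Proof.
elim: j => [|j IH]; first by rewrite /V big_ord0.
rewrite /= V_S; case: (sgn_at t j =P Sz) => H /=.
  by move=> Hl; rewrite IH // H Hl.
by move=> H2; rewrite H2 in H.
Qed.

Lemma PC_S f j : PC f j.+1 = PC f j + f j.
Proof. by rewrite /PC -addn1 iotaD count_cat /= addn0. Qed.

Lemma adm_Sp s t j : admissible s t -> sgn_at t j = Sp -> insupp s j.
Proof.
move=> /(_ j); rewrite !inE => H E; move: H; rewrite E /insupp /=.
by case: (sgn_at s j).
Qed.

Lemma Inv_all s t : admissible s t -> forall j, Inv s t j.
Proof.
move=> Hadm; elim=> [|j IH]; first by rewrite /Inv /= /V big_ord0.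
have Hl := Lp_le s j.
have HLS : Lp s j.+1 = if insupp s j then (Lp s j).+1 else 0 by [].
have Hlast : (0 < j) && (sgn_at t j.-1 == Sp) -> lastnz t j = Sp.
  by case: j {IH Hl HLS} => [|k] //= /eqP ->.
have Hz := @lastnz_Sz t j.
have HC : in_ceil s j = if insupp s j then true else odd (Lp s j) && (Lp s j < j).
  by case Hp: (insupp s j); [rewrite insupp_ceil | rewrite in_ceil_nS ?Hp].
have Hadj := @adm_Sp s t j Hadm.
have Hj0 : (lastnz t j == Sm) ==> (0 < j) by case: (j) => //= k; rewrite implybT.
have Hol : odd (Lp s j) -> 0 < Lp s j by case: (Lp s j).
move: IH; rewrite /Inv V_S PC_S HLS HC /=.
set o := (0 < j) && _ in Hlast *.
case Htj: (sgn_at t j) Hadj => Hadj; case Hpj: (insupp s j);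
  case Hla: (lastnz t j) Hlast Hz => Hlast Hz; case Ho: o Hlast => Hlast //=;
  try (rewrite Hz; [|by []]); try (by move: (Hadj erefl); rewrite Hpj);
  try (by have := Hlast erefl);
  rewrite ?oddS; move: Hol Hj0; rewrite Hla; case: (odd (Lp s j)); case: (ltngtP (Lp s j) j) => /=; lia.
Qed.

Lemma PC_stable (f : nat -> bool) m n : m <= n -> (forall i, m <= i -> ~~ f i) -> PC f n = PC f m.
Proof.
move=> Hmn H; rewrite /PC -(subnKC Hmn) iotaD count_cat.
rewrite (@eq_in_count _ _ pred0 (iota (0 + m) _)) ?count_pred0 ?addn0 //.
by move=> i; rewrite mem_iota add0n => /andP [Hi _] /=; apply/negbTE/H.
Qed.

Lemma SC_le_C s t : admissible s t -> SC t <= PC (in_ceil s) (size s).+1.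
Proof.
move=> Hadm; set M := (size t + size s).+1.
have HI := Inv_all Hadm M.
have Hz : sgn_at t M.-1 = Sz by rewrite /sgn_at nth_default //= leq_addr.
move: HI; rewrite /Inv Hz andbF => HI.
have HV : V t M <= PC (in_ceil s) M by lia.
rewrite SC_V; apply: leq_trans (V_mono t (_ : size t <= M)) _; first by rewrite /M; lia.
rewrite -(@PC_stable (in_ceil s) (size s).+1 M) //; first by rewrite /M; lia.
by move=> i Hi; apply/negP => /in_ceil_bound; lia.
Qed.


Definition wit (s : sseq) : sseq :=
  let N := (size s).+1 in
  let K := PC (in_floor s) N in
  [seq (if in_floor s i || (i == N) then (if odd (K + PC (in_floor s) i) then Sp else Sm) else Sz)
  | i <- iota 0 N.+1].

Lemma sgn_wit s i : i <= (size s).+1 ->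
  sgn_at (wit s) i = if in_floor s i || (i == (size s).+1) then
     (if odd (PC (in_floor s) (size s).+1 + PC (in_floor s) i) then Sp else Sm) else Sz.
Proof.
move=> Hi; rewrite /sgn_at /wit (nth_map 0) ?size_iota // nth_iota //.
Qed.

Lemma sgn_wit_out s i : (size s).+1 < i -> sgn_at (wit s) i = Sz.
Proof. by move=> Hi; rewrite /sgn_at nth_default // size_map size_iota. Qed.

Lemma wit_adm s : Splus s -> admissible s (wit s).
Proof.
move=> Hs i; case: (leqP i (size s).+1) => Hi; last by rewrite sgn_wit_out // !inE eqxx orbT.
rewrite sgn_wit //.
case: ifP => Hnz; last by rewrite !inE eqxx orbT.
case: ifP => Hod; last by rewrite !inE eqxx.
have HpN : ~~ insupp s (size s).+1 by apply/negP => /insupp_size; lia.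
have HFN : in_floor s (size s).+1 = false by apply/negP => /in_floor_bound; lia.
have Hp : insupp s i.
  case Hp0: (insupp s i) => //; have Hni : ~~ insupp s i by rewrite Hp0.
  have := coreB HpN Hi Hni; move: Hod; rewrite oddD => Hod Ho; rewrite Ho in Hod.
  by case: (odd _) Hod.
have Hil := insupp_size Hp.
have Hm : sgn_at s i != Sm by move/all_nthP: Hs; apply.
move: Hp Hm; rewrite /insupp !inE; case: (sgn_at s i) => //= _ _; rewrite orbT.
Qed.

Lemma opp_Sz x : opposite x Sz = false. Proof. by case: x. Qed.

Lemma wit_SC s : SC (wit s) = PC (in_floor s) (size s).+1.
Proof.
set N := (size s).+1; set K := PC (in_floor s) N.
have HFN : in_floor s N = false by apply/negP => /in_floor_bound; rewrite /N; lia.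
have Hind : forall j, j <= N -> V (wit s) j = (PC (in_floor s) j).-1 /\
   lastnz (wit s) j = if PC (in_floor s) j == 0 then Sz
                      else if odd (K + PC (in_floor s) j) then Sm else Sp.
  elim=> [|j IH] Hj; first by rewrite /V big_ord0.
  have [IHV IHL] := IH (ltnW Hj).
  have Hjn : (j == N) = false by apply/negbTE; rewrite neq_ltn Hj.
  rewrite V_S /= PC_S sgn_wit; last by rewrite -/N; lia.
  rewrite -/N -/K Hjn orbF IHV IHL.
  case: (in_floor s j) => /=.
    rewrite addn1 addnS /=.
    case: (odd (K + _)) => /=; case: eqP => HP /=; split => //; lia.
  rewrite !addn0 opp_Sz addn0; split => //.
rewrite SC_V /wit size_map size_iota -/N -/K V_S.
have [HV HL] := Hind N (leqnn _).
rewrite HV HL sgn_wit // -/N -/K eqxx orbT -/K.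
have -> : odd (K + K) = false by rewrite oddD; case: (odd K).
by case: eqP => HK0 /=; [rewrite HK0 | lia].
Qed.

Definition ddP s n := (exists t, admissible s t /\ SC t = n) /\
                      (forall t, admissible s t -> SC t <= n).

Lemma ddP_ex s B : (forall t, admissible s t -> SC t <= B) -> exists n, ddP s n.
Proof.
elim: B => [|B IH] H.
  exists 0; split => //; exists [::]; split; last by rewrite /SC big_ord0.
  by move=> i; rewrite /sgn_at nth_nil !inE eqxx orbT.
case: (classic (exists t, admissible s t /\ SC t = B.+1)) => [Hex|Hno].
  by exists B.+1; split.
apply: IH => t Ht; have := H t Ht; rewrite leq_eqVlt => /orP [/eqP E|] //.
by exfalso; apply: Hno; exists t.
Qed.

Lemma dd_spec s : ddP s (dd s).
Proof.
apply: (epsilon_spec (inhabits 0) (ddP s)).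
by apply: (@ddP_ex s (PC (in_ceil s) (size s).+1)) => t /SC_le_C.
Qed.

Lemma dd_le s : dd s <= PC (in_ceil s) (size s).+1.
Proof. by have [[t [Ht <-]] _] := dd_spec s; apply: SC_le_C. Qed.

Lemma dd_ge s : Splus s -> PC (in_floor s) (size s).+1 <= dd s.
Proof.
move=> Hs; have [_ H] := dd_spec s; rewrite -wit_SC; apply: H; exact: wit_adm.
Qed.

Lemma dd_mono s s' : (forall t, admissible s t -> admissible s' t) -> dd s <= dd s'.
Proof.
move=> H; have [[t [Ht <-]] _] := dd_spec s; have [_ H'] := dd_spec s'.
by apply: H'; apply: H.
Qed.

Lemma has_iota_ext (P : pred nat) m n : (forall b, P b -> b < m) -> m <= n ->
  has P (iota 0 m) = has P (iota 0 n).
Proof.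
move=> HP Hmn; rewrite -(subnKC Hmn) iotaD has_cat.
case: (has P (iota 0 m)) => //=; apply/esym/negbTE/hasPn => b.
by rewrite mem_iota add0n => /andP [Hb _]; apply/negP => /HP; lia.
Qed.

Lemma insupp_eqS s s' i : eqS s s' -> insupp s i = insupp s' i.
Proof. by move=> H; rewrite /insupp H. Qed.

Lemma isblock_eqS s s' a b : eqS s s' -> isblock s a b = isblock s' a b.
Proof.
move=> H; rewrite /isblock !(insupp_eqS _ H) (eq_all (a2 := insupp s')) //.
by move=> i; apply: insupp_eqS.
Qed.

Lemma isblock_last s a b : isblock s a b -> insupp s b.
Proof.
rewrite /isblock => /and4P [Hab /all_iotaP H _ _]; apply: H; lia.
Qed.

Lemma isblock_first s a b : isblock s a b -> insupp s a.
Proof.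
rewrite /isblock => /and4P [Hab /all_iotaP H _ _]; apply: H; lia.
Qed.

Lemma in_floor_eqS s s' i : eqS s s' -> in_floor s i = in_floor s' i.
Proof.
move=> H; rewrite /in_floor (insupp_eqS _ H).
rewrite (@has_iota_ext _ (size s) (size s + size s') _ (leq_addr _ _)); last first.
  by move=> b /andP [/isblock_last /insupp_size].
rewrite [in RHS](@has_iota_ext _ (size s') (size s + size s') _ (leq_addl _ _)); last first.
  by move=> b /andP [/isblock_last /insupp_size].
by congr (_ || _); apply: eq_has => b; rewrite (isblock_eqS _ _ H).
Qed.

Lemma in_ceil_eqS s s' i : eqS s s' -> in_ceil s i = in_ceil s' i.
Proof.
move=> H; rewrite /in_ceil (insupp_eqS _ H).
rewrite (@has_iota_ext _ (size s) (size s + size s') _ (leq_addr _ _)); last first.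
  by move=> b /and3P [/isblock_first /insupp_size].
rewrite [in RHS](@has_iota_ext _ (size s') (size s + size s') _ (leq_addl _ _)); last first.
  by move=> b /and3P [/isblock_first /insupp_size].
by congr (_ || _ && _); apply: eq_has => b; rewrite (isblock_eqS _ _ H).
Qed.

Lemma sgn_map (f : nat -> bool) n i :
  (forall i, f i -> i < n) ->
  sgn_at [seq (if f i then Sp else Sz) | i <- iota 0 n] i = if f i then Sp else Sz.
Proof.
move=> Hb; rewrite /sgn_at.
case: (ltnP i n) => H.
  by rewrite (nth_map 0) ?size_iota // nth_iota // add0n.
rewrite nth_default ?size_map ?size_iota //.
by case E: (f i) => //; have := Hb _ E; lia.
Qed.

Lemma sfloor_eqS s s' : eqS s s' -> eqS (sfloor s) (sfloor s').
Proof.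
move=> H i; rewrite /sfloor !sgn_map ?(in_floor_eqS _ H) // => k /in_floor_bound; lia.
Qed.

Lemma sceil_eqS s s' : eqS s s' -> eqS (sceil s) (sceil s').
Proof.
move=> H i; rewrite /sceil !sgn_map ?(in_ceil_eqS _ H) // => k /in_ceil_bound; lia.
Qed.

Lemma cntge0_ceil s : cntge (sceil s) 0 = PC (in_ceil s) (size s).+1.
Proof.
rewrite (@cntge_N _ 0 (size s).+1); last by rewrite size_map size_iota.
by apply: eq_count => i; rewrite insupp_sceil andbT.
Qed.

Lemma cntge0_floor s : cntge (sfloor s) 0 = PC (in_floor s) (size s).+1.
Proof.
rewrite (@cntge_N _ 0 (size s).+1); last by rewrite size_map size_iota.
by apply: eq_count => i; rewrite insupp_sfloor andbT.
Qed.

Unset Implicit Arguments.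
Theorem mainTheorem10 (s s' : sseq) :
  Splus s -> Splus s' ->
  (preceq (sfloor s) s /\ preceq s (sceil s)) /\
  (preceq s s' ->
     [/\ preceq (sfloor s) (sfloor s'), preceq (sceil s) (sceil s')
       & dd s <= dd s']).
Proof.
move=> Hs Hs'.
have prec : forall a b, (forall x, cntge (sceil a) x <= cntge (sfloor b) x) -> preceq a b.
  move=> a b H; case: (classic (eqS a b)) => E; [by left | right; split => //].
  exact: le0_of.
have ext : forall u x, cntge u x <= cntge (sfloor u) x.
  by move=> u; apply: cntge_sub => i; rewrite insupp_sfloor; apply: insupp_floor.
have CF : forall u x, cntge (sceil (sfloor u)) x <= cntge (sfloor u) x.
  by move=> u; apply: cntge_sub => i; rewrite insupp_sceil insupp_sfloor; apply: ceil_floor_sub.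
have CC : forall u x, cntge (sceil (sceil u)) x <= cntge (sceil u) x.
  by move=> u; apply: cntge_sub => i; rewrite !insupp_sceil; apply: ceil_ceil_sub.
split; first by split; apply: prec => x; [apply: CF | apply: ext].
case=> [E | [_ /le0_to H]].
  split.
  - by left; apply: sfloor_eqS.
  - by left; apply: sceil_eqS.
  - apply: dd_mono => t Ht i; rewrite -(E i); exact: Ht.
split.
- apply: prec => x; apply: leq_trans (CF s x) _; apply: leq_trans (floor_le_ceil s x) _.
  by apply: leq_trans (H x) _; apply: ext.
- apply: prec => x; apply: leq_trans (CC s x) _; apply: leq_trans (H x) _.
  by apply: leq_trans (floor_le_ceil s' x) _; apply: ext.
- apply: leq_trans (dd_le s) _; rewrite -cntge0_ceil.
  by apply: leq_trans (H 0) _; rewrite cntge0_floor; apply: dd_ge.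
Qed.
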